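(* Let $\nu=(\nu_1,\ldots,\nu_p)$ be a vector of $p$-orthogonality for $\{P_n\}$, and let $\{P^{(p)}_n\}$ be the sequence associated with the Darboux transformation $J^{(p)}$ of some Darboux factorization of $J-CI$. Then $\nu^{(p)}=\big((z-C)\nu_1,(z-C)\nu_2,\ldots,(z-C)\nu_p\big)$ is a vector of $p$-orthogonality for $\{P^{(p)}_n\}$.
   Context: Fix $p\in\mathbb{N}$. Let $J=(a_{n,m})_{n,m\ge0}$ be an infinite matrix with $a_{n,n+1}=1$, $a_{n,m}=0$ for $m>n+1$ or $m<n-p$, and $a_{n+p,n}\neq0$ for all $n\ge0$. Define polynomials by $P_{-p}=\cdots=P_{-1}=0$, $P_0\equiv1$, $P_{n+1}(z)=(z-a_{n,n})P_n(z)-\sum_{i=1}^p a_{n,n-i}P_{n-i}(z)$ for $n\ge0$. Fix $C\in\mathbb{C}$ with $P_n(C)\neq0$ for all $n\ge1$. A Darboux factorization of $J-CI$ is a factorization $J-CI=L^{(1)}L^{(2)}\cdots L^{(p)}U$ where, indexing rows and columns by $1,2,\ldots$, $U$ is upper bidiagonal with $U_{k,k}=\gamma_{(k-1)(p+1)+1}$, $U_{k,k+1}=1$, and for $j=1,\ldots,p$, $L^{(j)}$ is lower bidiagonal with ones on the diagonal and $L^{(j)}_{k+1,k}=\gamma_{(k-1)(p+1)+j+1}\neq0$ for all $k\ge1$. The Darboux transformation $J^{(p)}=CI+UL^{(1)}\cdots L^{(p)}$ is lower Hessenberg with ones on the superdiagonal, and $\{P^{(p)}_n\}_{n\ge0}$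 is the unique sequence of polynomials with $P^{(p)}_0\equiv1$ such that $v(z)=(P^{(p)}_0(z),P^{(p)}_1(z),\ldots)^T$ satisfies $J^{(p)}v(z)=zv(z)$. A vector of $p$-orthogonality for a sequence of polynomials $\{Q_n\}$ is a vector $(\nu_1,\ldots,\nu_p)$ of linear functionals on polynomials with, for each $r=1,\ldots,p$ and $k=0,1,\ldots$: $\nu_r[z^kQ_n]=0$ for all $n\ge kp+r$, and $\nu_r[z^kQ_{kp+r-1}]\neq0$. For a functional $\mu$, $(z-C)\mu$ is the functional $q\mapsto\mu[(z-C)q]$. *)

(* Defs.v *)
(* Infinite matrices are functions nat -> nat -> R (0-indexed). *)
From HB Require Import structures.
From mathcomp Require Import all_boot all_order all_algebra.
Set Implicit Arguments. Unset Strict Implicit. Unset Printing Implicit Defensive.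
Import GRing.Theory.
Local Open Scope ring_scope.

Section Defs.
Variable R : fieldType.

Definition imat := nat -> nat -> R.

(* Entry (i,j) of the product A*B, where the left factor A has no nonzero entry
   beyond the superdiagonal in row i (A i k = 0 for k > i+1); then the sum over
   k < i+2 is the full (finite) matrix product sum.  All left factors used below
   (lower bidiagonal matrices, U, and products U L^(1)...L^(j)) have this shape. *)
Definition hmul (A B : imat) : imat :=
  fun i j => \sum_(k < i.+2) A i k * B k j.

(* Polynomials P_n: P_0 = 1, P_{-p} = ... = P_{-1} = 0,
   P_{n+1} = (z - a_{n,n}) P_n - sum_{i=1}^p a_{n,n-i} P_{n-i}. *)
Fixpoint Pseq (a : imat) (p : nat) (n : nat) : seq {poly R} :=
  match n with
  | 0 => [:: 1]
  | k.+1 => let s := Pseq a p k in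
      rcons s (('X - (a k k)%:P) * nth 0 s k
               - \sum_(1 <= i < p.+1 | (i <= k)%N) (a k (k - i)%N)%:P * nth 0 s (k - i)%N)
  end.

Definition Ppoly (a : imat) (p n : nat) : {poly R} := nth 0 (Pseq a p n) n.

(* Darboux factorization data (0-indexed rows/cols; paper's row k is our k-1).
   U_{k,k} = gamma_{k(p+1)+1}, U_{k,k+1} = 1;
   L^(j)_{k,k} = 1, L^(j)_{k+1,k} = gamma_{k(p+1)+j+1}. *)
Definition Umat (p : nat) (g : nat -> R) : imat :=
  fun i k => if k == i then g (i * p.+1).+1
             else if k == i.+1 then 1 else 0.

Definition Lmat (p : nat) (g : nat -> R) (j : nat) : imat :=
  fun i k => if k == i then 1
             else if i == k.+1 then g (k * p.+1 + j).+1 else 0.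

Definition LU (p : nat) (g : nat -> R) : imat :=
  foldr (fun j M => hmul (Lmat p g j) M) (Umat p g) (iota 1 p).

Definition UL (p : nat) (g : nat -> R) : imat :=
  foldl (fun M j => hmul M (Lmat p g j)) (Umat p g) (iota 1 p).

Definition is_Darboux_factorization (a : imat) (C : R) (p : nat) (g : nat -> R) :=
  (forall k j, (1 <= j <= p)%N -> g (k * p.+1 + j).+1 != 0) /\
  (forall i k, a i k - (if i == k then C else 0) = LU p g i k).

Definition Jp (C : R) (p : nat) (g : nat -> R) : imat :=
  fun i k => (if i == k then C else 0) + UL p g i k.

Definition lin_functional (f : {poly R} -> R) :=
  forall (c : R) (x y : {poly R}), f (c *: x + y) = c * f x + f y.

Definition p_orthogonal (p : nat) (Q : nat -> {poly R}) (nu : nat -> {poly R} -> R) :=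
  (forall r, (1 <= r <= p)%N -> lin_functional (nu r)) /\
  (forall r k, (1 <= r <= p)%N ->
     (forall n, (k * p + r <= n)%N -> nu r ('X^k * Q n) = 0) /\
     nu r ('X^k * Q (k * p + r).-1) != 0).

Definition shift_fun (C : R) (mu : {poly R} -> R) : {poly R} -> R :=
  fun q => mu (('X - C%:P) * q).

End Defs.

(* Main.v *)
Require Import Defs.
From HB Require Import structures.
From mathcomp Require Import all_boot all_order all_algebra.
From mathcomp Require Import zify ring.
Set Implicit Arguments. Unset Strict Implicit. Unset Printing Implicit Defensive.
Import GRing.Theory.
Local Open Scope ring_scope.

Section H.
Variable R : fieldType.
Implicit Types (A B M : imat R) (v w : nat -> {poly R}).

Definition mv A v (i : nat) : {poly R} := \sum_(k < i.+2) (A i k)%:P * v k.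

Lemma mv_ext A v w i : (forall k, v k = w k) -> mv A v i = mv A w i.
Proof. by move=> h; apply: eq_bigr => k _; rewrite h. Qed.

Lemma mvZ A c v i : mv A (fun k => c * v k) i = c * mv A v i.
Proof. rewrite /mv mulr_sumr; apply: eq_bigr => k _; by rewrite mulrCA. Qed.

Lemma sum_trunc n1 n2 (F : nat -> {poly R}) :
  (n1 <= n2)%N -> (forall m, (n1 <= m)%N -> F m = 0) ->
  \sum_(m < n2) F m = \sum_(m < n1) F m.
Proof.
move=> le h; rewrite -!(big_mkord xpredT) (@big_cat_nat _ _ _ n1 0 n2) /=; last by []; last by [].
rewrite [X in _ + X]big1_seq ?addr0 // => m /andP [_]; rewrite mem_iota => /andP [hm _]; exact: h.
Qed.

Lemma sum_eqmin n1 n2 (F : nat -> {poly R}) :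
  (forall m, (minn n1 n2 <= m)%N -> F m = 0) ->
  \sum_(m < n1) F m = \sum_(m < n2) F m.
Proof.
move=> h; case: (leqP n1 n2) => le.
  by rewrite (sum_trunc le) // => m hm; apply: h; rewrite (minn_idPl le).
by rewrite (sum_trunc (ltnW le)) // => m hm; apply: h; rewrite (minn_idPr (ltnW le)).
Qed.

Lemma mv_hmul_gen A B v i :
  (forall k, (k < i.+2)%N -> (A i k)%:P * \sum_(m < k.+2) (B k m)%:P * v m
      = (A i k)%:P * \sum_(m < i.+2) (B k m)%:P * v m) ->
  mv (hmul A B) v i = mv A (mv B v) i.
Proof.
move=> h; rewrite /mv /hmul.
transitivity (\sum_(k < i.+2) (A i k)%:P * \sum_(m < i.+2) (B k m)%:P * v m); last first.
  by apply: eq_bigr => k _; rewrite h.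
under [RHS]eq_bigr do rewrite mulr_sumr.
rewrite [RHS]exchange_big /=; apply: eq_bigr => m _.
rewrite raddf_sum /= mulr_suml; apply: eq_bigr => k _.
by rewrite polyCM mulrA.
Qed.

Definition lower A := forall i k, (i < k)%N -> A i k = 0.
Definition hess B := forall k m, (k.+1 < m)%N -> B k m = 0.

Lemma mv_hmul_lowerR A B v i : lower B -> mv (hmul A B) v i = mv A (mv B v) i.
Proof.
move=> hB; apply: mv_hmul_gen => k hk; congr (_ * _); apply: (sum_eqmin (F := fun m => (B k m)%:P * v m)) => m hm.
by rewrite hB ?mul0r ?polyC0 //; move: hm hk; lia.
Qed.

Lemma mv_hmul_lowerL A B v i : (forall k, (i < k)%N -> A i k = 0) -> hess B ->
  mv (hmul A B) v i = mv A (mv B v) i.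
Proof.
move=> hA hB; apply: mv_hmul_gen => k hk.
case: (ltnP i k) => ik; first by rewrite hA // !mul0r.
congr (_ * _); apply: (sum_eqmin (F := fun m => (B k m)%:P * v m)) => m hm.
by rewrite hB ?mul0r ?polyC0 //; move: hm ik; lia.
Qed.

Lemma lower_L p g j : lower (Lmat p g j).
Proof.
move=> i k ik; rewrite /Lmat; case: ifP => [/eqP|_]; first lia.
by case: ifP => [/eqP|//]; lia.
Qed.

Lemma hess_U p g : hess (Umat p g).
Proof.
move=> k m km; rewrite /Umat; case: ifP => [/eqP|_]; first lia.
by case: ifP => [/eqP|//]; lia.
Qed.

Lemma hess_hmulL p g j M : hess M -> hess (hmul (Lmat p g j) M).
Proof.
move=> hM k m km; rewrite /hmul big1 // => l _.
case: (ltnP k l) => kl; first by rewrite lower_L // mul0r.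
by rewrite hM ?mulr0 //; lia.
Qed.

Definition Fs p g (s : seq nat) w : nat -> {poly R} :=
  foldr (fun j (w' : nat -> {poly R}) => mv (Lmat p g j) w') w s.

Lemma LU_mv p g s :
  hess (foldr (fun j M => hmul (Lmat p g j) M) (Umat p g) s) /\
  forall v i, mv (foldr (fun j M => hmul (Lmat p g j) M) (Umat p g) s) v i
              = Fs p g s (mv (Umat p g) v) i.
Proof.
elim: s => [|j s [IH1 IH2]] /=; first by split => //; exact: hess_U.
split; first exact: hess_hmulL.
move=> v i; rewrite mv_hmul_lowerL //; last by move=> k; apply: lower_L.
by apply: mv_ext => k; rewrite IH2.
Qed.

Lemma UL_mv p g s M v i :
  mv (foldl (fun M j => hmul M (Lmat p g j)) M s) v i = mv M (Fs p g s v) i.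
Proof.
elim: s M v => [|j s IH] M v //=.
rewrite IH mv_hmul_lowerR //; exact: lower_L.
Qed.

Lemma mv_delta C M w n :
  mv (fun i k => (if i == k then C else 0) + M i k) w n = C%:P * w n + mv M w n.
Proof.
rewrite /mv; under eq_bigr do rewrite polyCD mulrDl.
rewrite big_split /=; congr (_ + _).
rewrite 2!big_ord_recr /= eqxx big1; last first.
  by move=> k _; case: ifP => [/eqP|]; [move: (ltn_ord k) => /=; lia| rewrite mul0r].
have -> : (n == n.+1) = false by lia.
by rewrite mul0r addr0 add0r.
Qed.

Lemma mv_U p g w n : mv (Umat p g) w n = (g (n * p.+1).+1)%:P * w n + w n.+1.
Proof.
rewrite /mv 2!big_ord_recr /= big1; last first.
  move=> k _; rewrite /Umat; case: ifP => [/eqP|_]; first by move: (ltn_ord k) => /=; lia.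
  by case: ifP => [/eqP|_]; [move: (ltn_ord k) => /=; lia| rewrite mul0r].
rewrite /Umat eqxx add0r; have -> : (n.+1 == n) = false by lia.
by rewrite eqxx mul1r.
Qed.


Lemma size_Pseq (a : imat R) p n : size (Pseq a p n) = n.+1.
Proof. by elim: n => [|n IH] //=; rewrite size_rcons IH. Qed.

Lemma nth_Pseq (a : imat R) p n m : (m <= n)%N -> nth 0 (Pseq a p n) m = Ppoly a p m.
Proof.
elim: n => [|n IH] hm; first by move: hm; rewrite leqn0 => /eqP ->.
case: (leqP m n) => h.
  by rewrite /= nth_rcons size_Pseq ltnS h IH.
by have -> : m = n.+1 by lia.
Qed.

Lemma Ppoly_rec (a : imat R) p n : Ppoly a p n.+1 = ('X - (a n n)%:P) * Ppoly a p n
   - \sum_(1 <= i < p.+1 | (i <= n)%N) (a n (n - i)%N)%:P * Ppoly a p (n - i)%N.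
Proof.
rewrite /Ppoly /= nth_rcons size_Pseq ltnn eqxx nth_Pseq //.
congr (_ - _); apply: eq_bigr => i _; rewrite nth_Pseq //; exact: leq_subr.
Qed.

Lemma Ppoly0 (a : imat R) p : Ppoly a p 0 = 1.
Proof. by []. Qed.

Lemma mv_a (a : imat R) p (ha_sup : forall n, a n n.+1 = 1)
  (ha_low : forall n m, (m + p < n)%N -> a n m = 0) n :
  mv a (Ppoly a p) n = 'X * Ppoly a p n.
Proof.
rewrite /mv 2!big_ord_recr /= ha_sup polyC1 mul1r Ppoly_rec.
set f := fun k => (a n k)%:P * Ppoly a p k.
have -> : \sum_(i < n) (a n (widen_ord (leqnSn n.+1) (widen_ord (leqnSn n) i)))%:P *
     Ppoly a p (widen_ord (leqnSn n.+1) (widen_ord (leqnSn n) i))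
   = \sum_(1 <= i < p.+1 | (i <= n)%N) f (n - i)%N.
  rewrite -(big_mkord xpredT f) big_nat_rev /= add0n.
  rewrite big_add1 /=.
  rewrite (big_nat_widen _ _ _ _ _ (leq_addr p n)).
  rewrite [RHS](big_nat_widen _ _ _ _ _ (leq_addl n p)).
  rewrite [LHS]big_mkcond [RHS]big_mkcond; apply: eq_bigr => i _ /=.
  case: (ltnP i n) => hin; case: (ltnP i p) => hip //=.
  by rewrite /f ha_low ?mul0r //; lia.
rewrite /f; set S := \sum_(_ <= _ < _ | _) _.
rewrite mulrBl; ring.
Qed.

Lemma LU00 p g s : foldr (fun j M => hmul (Lmat p g j) M) (Umat p g) s 0%N 0%N = Umat p g 0 0.
Proof.
elim: s => [|j s IH] //=.
by rewrite /hmul 2!big_ord_recr big_ord0 /= IH /Lmat /= mul1r mul0r add0r addr0.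
Qed.

Lemma ULsup p g s M n : foldl (fun M j => hmul M (Lmat p g j)) M s n n.+1 = M n n.+1.
Proof.
elim: s M => [|j s IH] M //=; rewrite IH /hmul big_ord_recr /= big1.
  by rewrite /Lmat eqxx mulr1 add0r.
by move=> k _; rewrite lower_L ?mulr0 //= ltnS.
Qed.

End H.

Theorem lemma4 (R : fieldType) (p : nat) (a : imat R) (C : R)
  (ha_sup : forall n, a n n.+1 = 1)
  (ha_up : forall n m, (n.+1 < m)%N -> a n m = 0)
  (ha_low : forall n m, (m + p < n)%N -> a n m = 0)
  (ha_diag : forall n, a (n + p)%N n != 0)
  (hC : forall n, (1 <= n)%N -> (Ppoly a p n).[C] != 0)
  (nu : nat -> {poly R} -> R)
  (hnu : p_orthogonal p (Ppoly a p) nu)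
  (g : nat -> R) (hD : is_Darboux_factorization a C p g)
  (Pp : nat -> {poly R})
  (hPp0 : Pp 0%N = 1)
  (hPp : forall n, \sum_(m < n.+2) (Jp C p g n m)%:P * Pp m = 'X * Pp n) :
  p_orthogonal p Pp (fun r => shift_fun C (nu r)).
Proof.
set P := Ppoly a p.
set Q := fun n => mv (Umat p g) P n.
have [_ hD2] := hD.
have eig : forall n, mv (Jp C p g) Q n = 'X * Q n.
  move=> n; rewrite /Jp mv_delta /UL UL_mv.
  rewrite (@mv_ext R _ _ (fun k => ('X - C%:P) * P k)); last first.
    move=> k; have [_ h2] := LU_mv p g (iota 1 p).
    transitivity (mv (LU p g) P k); first by rewrite /LU h2.
    have -> : mv (LU p g) P k = mv a P k - C%:P * P k.
      have -> : mv a P k = mv (fun i j => (if i == j then C else 0) + LU p g i j) P k.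
        by apply: eq_bigr => j _; rewrite -hD2 addrC subrK.
      by rewrite mv_delta addrC addKr.
    by rewrite /P mv_a // mulrBl.
  by rewrite mvZ /Q mulrBl addrC subrK.
have key : forall n, ('X - C%:P) * Pp n = Q n.
  suff H : forall n m, (m <= n)%N -> ('X - C%:P) * Pp m = Q m by move=> n; exact: (H n).
  elim=> [|n IH] m hm.
    move: hm; rewrite leqn0 => /eqP ->.
    rewrite hPp0 mulr1 /Q mv_U mul0n /P Ppoly0 mulr1 Ppoly_rec Ppoly0 mulr1.
    rewrite big1_seq; last by move=> i /andP [hi]; rewrite mem_iota; lia.
    have := hD2 0%N 0%N; rewrite /LU LU00 /Umat /= => <-.
    rewrite polyCB; ring.
  case: (leqP m n) => hmn; first exact: IH.
  have -> : m = n.+1 by lia.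
  have h := hPp n; have e := eig n.
  rewrite /mv big_ord_recr /= in e; rewrite big_ord_recr /= in h.
  have J1 : Jp C p g n n.+1 = 1.
    rewrite /Jp /UL ULsup /Umat eqxx.
    have -> : (n == n.+1) = false by lia.
    have -> : (n.+1 == n) = false by lia.
    by rewrite add0r.
  rewrite J1 polyC1 mul1r in e h.
  have hs : \sum_(i < n.+1) (Jp C p g n (widen_ord (leqnSn n.+1) i))%:P * Q (widen_ord (leqnSn n.+1) i)
     = ('X - C%:P) * \sum_(i < n.+1) (Jp C p g n (widen_ord (leqnSn n.+1) i))%:P * Pp (widen_ord (leqnSn n.+1) i).
    rewrite mulr_sumr; apply: eq_bigr => i _ /=; rewrite mulrCA IH //.
    by rewrite -ltnS.
  have eQ : Q n.+1 = 'X * Q n - \sum_(i < n.+1) (Jp C p g n (widen_ord (leqnSn n.+1) i))%:P * Q (widen_ord (leqnSn n.+1) i).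
    by rewrite -e addrAC subrr add0r.
  have eP : Pp n.+1 = 'X * Pp n - \sum_(i < n.+1) (Jp C p g n (widen_ord (leqnSn n.+1) i))%:P * Pp (widen_ord (leqnSn n.+1) i).
    by rewrite -h ?mul1r addrAC subrr add0r.
  rewrite eQ hs eP -(IH n) //; ring.
have gnz : forall n, g (n * p.+1).+1 != 0.
  move=> n; apply/negP => /eqP g0.
  have : (Q n).[C] = 0 by rewrite -key hornerM hornerXsubC subrr mul0r.
  rewrite /Q mv_U g0 mul0r add0r => /eqP; apply/negP; exact: hC.
have [hlin horth] := hnu.
split.
  move=> r hr c x y; rewrite /shift_fun mulrDr -scalerAr; exact: hlin.
move=> r k hr; have [ho1 ho2] := horth r k hr.
have ex : forall n, shift_fun C (nu r) ('X^k * Pp n)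
    = g (n * p.+1).+1 * nu r ('X^k * P n) + nu r ('X^k * P n.+1).
  move=> n; rewrite /shift_fun mulrCA key /Q mv_U mulrDr mulrCA mul_polyC hlin //.
split.
  move=> n hn /=; rewrite ex (ho1 n) // (ho1 n.+1) ?mulr0 ?addr0 //; lia.
rewrite /= ex (ho1 (k * p + r).-1.+1); last by lia.
rewrite addr0; apply: mulf_neq0 => //.
Qed.
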